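(* Let $U\in C^{3}(\mathbb{R}^{d})$ be a Morse function and $\boldsymbol{\ell}$ a $C^{1}$ vector field with $\nabla U\cdot\boldsymbol{\ell}\equiv0$. Let $\boldsymbol{\sigma}$ be a critical point of $U$ such that $\mathbb{H}^{\boldsymbol{\sigma}}=\nabla^{2}U(\boldsymbol{\sigma})$ has exactly one negative eigenvalue $-\lambda^{\boldsymbol{\sigma}}$, and let $-\mu^{\boldsymbol{\sigma}}$ denote the unique negative eigenvalue of $\mathbb{H}^{\boldsymbol{\sigma}}+\mathbb{L}^{\boldsymbol{\sigma}}$, where $\mathbb{L}^{\boldsymbol{\sigma}}=D\boldsymbol{\ell}(\boldsymbol{\sigma})$. Then $\mu^{\boldsymbol{\sigma}}\ge\lambda^{\boldsymbol{\sigma}}$, and consequently $\omega^{\boldsymbol{\sigma}}\ge\omega^{\boldsymbol{\sigma}}_{\mathrm{rev}}$, where $\omega^{\boldsymbol{\sigma}}=\frac{\mu^{\boldsymbol{\sigma}}}{2\pi\sqrt{-\det\mathbb{H}^{\boldsymbol{\sigma}}}}$ and $\omega^{\boldsymbol{\sigma}}_{\mathrm{rev}}=\frac{\lambda^{\boldsymbol{\sigma}}}{2\pi\sqrt{-\det\mathbb{H}^{\boldsymbol{\sigma}}}}$.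
   Context: Under these hypotheses it is known that $\mathbb{H}^{\boldsymbol{\sigma}}+\mathbb{L}^{\boldsymbol{\sigma}}$ is invertible and has exactly one negative eigenvalue, so $\mu^{\boldsymbol{\sigma}}>0$ is well defined. *)

(* Defs.v *)
From HB Require Import structures.
From mathcomp Require Import all_boot all_order all_algebra.
From mathcomp Require Import all_classical all_reals all_analysis.
Set Implicit Arguments. Unset Strict Implicit. Unset Printing Implicit Defensive.
Import Order.TTheory GRing.Theory Num.Theory.
Import numFieldNormedType.Exports.
Local Open Scope ring_scope.

Section Defs.
Variables (R : realType) (d : nat).

Definition evec (i : 'I_d) : 'rV[R]_d := delta_mx 0 i.

Definition pderiv (i : 'I_d) (f : 'rV[R]_d -> R) : 'rV[R]_d -> R :=
  'D_(evec i) f.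

Fixpoint Ck (k : nat) (f : 'rV[R]_d -> R) : Prop :=
  match k with
  | 0 => continuous f
  | k'.+1 => continuous f /\
      forall i : 'I_d, (forall x, derivable f x (evec i)) /\ Ck k' (pderiv i f)
  end.

Definition Ck_field (k : nat) (l : 'rV[R]_d -> 'rV[R]_d) : Prop :=
  forall j : 'I_d, Ck k (fun x => l x 0 j).

Definition grad (f : 'rV[R]_d -> R) (x : 'rV[R]_d) : 'rV[R]_d :=
  \row_i pderiv i f x.

Definition hessian (f : 'rV[R]_d -> R) (x : 'rV[R]_d) : 'M[R]_d :=
  \matrix_(i, j) pderiv j (pderiv i f) x.

Definition jacobian_field (l : 'rV[R]_d -> 'rV[R]_d) (x : 'rV[R]_d) : 'M[R]_d :=
  \matrix_(i, j) pderiv j (fun y => l y 0 i) x.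

Definition critical_point (f : 'rV[R]_d -> R) (x : 'rV[R]_d) : Prop :=
  grad f x = 0.

Definition morse (f : 'rV[R]_d -> R) : Prop :=
  forall x, critical_point f x -> \det (hessian f x) != 0.

End Defs.

(* Main.v *)
Require Import Defs.
From HB Require Import structures.
From mathcomp Require Import all_boot all_order all_algebra.
From mathcomp Require Import all_classical all_reals all_analysis.
From mathcomp Require Import complex.
From mathcomp Require Import ring lra.
Import Order.TTheory GRing.Theory Num.Theory.
Import numFieldNormedType.Exports.
Local Open Scope ring_scope.

Lemma LA (R : realType) n (H : 'M[R]_n) (lam : R) :
  0 <= lam -> H^T = H -> (forall a, a < 0 -> eigenvalue H a -> a = - lam) ->
  forall w : 'rV[R]_n, 0 <= (w *m H *m (H + lam%:M) *m w^T) 0 0.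
Proof.
move=> lam0 Hsym Hneg w.
pose f := real_complex R.
pose Hc := map_mx f H.
have herm : Hc \is hermsymmx.
  apply: realsym_hermsym.
    apply/is_hermitianmxP; rewrite expr0 scale1r; apply/matrixP => i j.
    by rewrite !mxE /= -[in LHS]Hsym mxE.
  by apply/mxOverP => i j; rewrite mxE; apply/complex_realP; exists (H i j).
have normal := hermitian_normalmx herm.
have Hc_eq : Hc = invmx (spectralmx Hc) *m diag_mx (spectral_diag Hc) *m spectralmx Hc.
  by apply/orthomx_spectralP.
have Dreal := hermitian_spectral_diag_real herm.
have Punit : spectralmx Hc \in unitmx := spectral_unit Hc.
have Pu : spectralmx Hc \is unitarymx := spectral_unitarymx Hc.
move: Hc_eq Dreal Punit Pu.
set P := spectralmx Hc; set D := spectral_diag Hc => Hc_eq Dreal Punit Pu.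
have PPi : P *m invmx P = 1%:M := mulmxV Punit.
have Dk : forall k, 0 <= D 0 k * (D 0 k + f lam).
  move=> k.
  move: Dreal => /mxOverP /(_ 0 k) /complex_realP [r Dr]; rewrite Dr.
  have eig : eigenvalue H r.
    rewrite eigenvalue_root_char -(fmorph_root f) map_char_poly -eigenvalue_root_char.
    apply/eigenvalueP; exists (row k P).
      rewrite -row_mul -/Hc.
      have -> : P *m Hc = diag_mx D *m P by rewrite {1}Hc_eq !mulmxA PPi mul1mx.
      by rewrite row_mul row_diag_mx -scalemxAl -rowE Dr.
    apply/eqP => h0.
    have : (P *m invmx P) k k = 1 by rewrite PPi mxE eqxx.
    rewrite mxE big1 => [|j _]; first by move/eqP; rewrite eq_sym oner_eq0.
    by have := congr1 (fun M : 'rV_n => M 0 j) h0; rewrite !mxE => ->; rewrite mul0r.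
  case: (ltrP r 0) => [rneg|rpos].
    by rewrite (Hneg r rneg eig) -rmorphD -rmorphM ler0c addNr mulr0.
  by rewrite -rmorphD -rmorphM ler0c mulr_ge0 // addr_ge0.
suff : 0 <= (map_mx f (w *m H *m (H + lam%:M) *m w^T)) 0 0.
  by rewrite [X in _ <= X]mxE ler0c.
rewrite !map_mxM map_mxD -map_trmx map_scalar_mx -/Hc.
set wc := map_mx f w.
set c := f lam.
have HcD : Hc + c%:M = invmx P *m (diag_mx D + c%:M) *m P.
  by rewrite mulmxDr mulmxDl -Hc_eq mul_mx_scalar -scalemxAl mulVmx // scalemx1.
pose z := wc *m invmx P.
pose e := \row_k (D 0 k * (D 0 k + c)).
have E : diag_mx D *m (diag_mx D + c%:M) = diag_mx e.
  rewrite -diag_const_mx -raddfD mul_mx_diag; apply/matrixP => i j; rewrite !mxE.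
  by case: eqVneq => [->|_]; rewrite ?mulr1n ?mulr0n ?mul0r.
have Pw : P *m wc^T = (map_mx Num.conj z)^T.
  rewrite /z invmx_unitary //; apply/matrixP => i j; rewrite !mxE rmorph_sum.
  apply: eq_bigr => m _; rewrite !mxE rmorphM mulrC; congr (_ * _).
    by symmetry; apply: conj_Creal; apply/complex_realP; exists (w j m).
  by symmetry; exact: conjCK.
have -> : wc *m Hc *m (Hc + c%:M) *m wc^T = z *m diag_mx e *m (P *m wc^T).
  rewrite HcD {1}Hc_eq -E /z !mulmxA mulmxK //.
rewrite Pw mul_mx_diag mxE; apply: sumr_ge0 => j _; rewrite !mxE.
rewrite mulrAC mulrC; apply: mulr_ge0; first exact: Dk.
exact: mul_conjC_ge0.
Qed.

Lemma char_poly_tr (R : comNzRingType) n (A : 'M[R]_n) : char_poly A^T = char_poly A.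
Proof. rewrite /char_poly -det_tr; congr (\det _); apply/matrixP => i j; rewrite !mxE eq_sym //. Qed.

Lemma lim_zero (R : realType) (f : R -> R) (L : R) :
  (f @ 0^' --> L)%classic -> (forall t, f t = 0) -> L = 0.
Proof.
move=> c h; have e : f = cst 0 by apply/funext => t; rewrite h.
rewrite e in c; exact: (cvg_unique _ c (cvg_cst _)).
Qed.

Section Sec.
Local Open Scope classical_set_scope.
Set Implicit Arguments. Unset Strict Implicit. Unset Printing Implicit Defensive.
Section An.
Variables (R : realType) (d : nat).
Local Notation V := 'rV[R]_d.

Lemma line_quot (f : V -> R) (v x : V) (s : R) :
  (fun h : R => h^-1 *: (((fun s => f (s *: v + x)) \o shift s) (h *: (1:R)) - f (s *: v + x))) =
  (fun h => h^-1 *: ((f \o shift (s *: v + x)) (h *: v) - f (s *: v + x))).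
Proof.
apply/funext => h /=; congr (_ *: (f _ - _)).
by rewrite [_%:A]mulr1 scalerDl addrA.
Qed.

Lemma line_derive (f : V -> R) (v x : V) s : derivable f (s *: v + x) v ->
  is_derive s 1 (fun s => f (s *: v + x)) ('D_v f (s *: v + x)).
Proof.
move=> df; split; first by rewrite /derivable line_quot.
by rewrite /derive line_quot.
Qed.

Lemma mvt0 (F dF : R -> R) (t : R) : (forall s : R, is_derive s (1:R) F (dF s)) ->
  exists c, `|c| <= `|t| /\ F t - F 0 = t * dF c.
Proof.
move=> dF_.
have dd : forall a b : R, {in `[a, b]%R, forall z, derivable F z 1}.
  by move=> a b z _; have [] := dF_ z.
have cont := fun a b => derivable_within_continuous (dd a b).
have D : forall a b : R, forall z, z \in `]a, b[%R -> is_derive z 1 F (dF z) by [].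
case: (lerP 0 t) => t0.
  have [c c0t E] := MVT_segment t0 (D 0 t) (cont 0 t).
  exists c; split; last by rewrite E subr0 mulrC.
  move: c0t; rewrite in_itv /= => /andP[c0 ct].
  by rewrite !ger0_norm.
have [c c0t E] := MVT_segment (ltW t0) (D t 0) (cont t 0).
exists c; split.
  move: c0t; rewrite in_itv /= => /andP[c0 ct].
  rewrite !ler0_norm //; [by rewrite lerN2| exact: ltW].
by rewrite -opprB E sub0r mulrN mulrC opprK.
Qed.

Lemma cvg_bound (xi : R -> V) x K : (forall t, `|xi t - x| <= `|t| * K) ->
  xi @ 0^' --> x.
Proof.
move=> Hb; apply/cvgrPdist_lt => e e0.
have K1 : 0 < `|K| + 1 by rewrite ltr_wpDl.
near=> t.
rewrite distrC (le_lt_trans (Hb t)) //.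
have ht : `|t| < e / (`|K| + 1) by near: t; apply: dnbhs0_lt; rewrite divr_gt0.
have KK : K <= `|K| + 1 by rewrite (le_trans (ler_norm K)) // lerDl.
rewrite (le_lt_trans (ler_wpM2l (normr_ge0 t) KK)) //.
by rewrite -ltr_pdivlMr.
Unshelve. all: by end_near.
Qed.

Lemma cvg_sum_ord (T : Type) (F : set_system T) {FF : Filter F} n (f : 'I_n -> T -> R) (l : 'I_n -> R) :
  (forall i, f i @ F --> l i) -> (fun t => \sum_(i < n) f i t) @ F --> \sum_(i < n) l i.
Proof.
elim: n f l => [|n IH] f l Hf.
  under eq_fun do rewrite big_ord0. rewrite big_ord0; exact: cvg_cst.
under eq_fun do rewrite big_ord_recr /=. rewrite big_ord_recr /=.
apply: cvgD; last exact: Hf.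
exact: (IH (fun i => f (widen_ord (leqnSn n) i)) (fun i => l (widen_ord (leqnSn n) i))).
Qed.


Lemma eq_lim_choice (A B : V -> R) x K :
  {for x, continuous A} -> {for x, continuous B} ->
  (forall t : R, t != 0 -> exists p q, `|p - x| <= `|t| * K /\ `|q - x| <= `|t| * K /\ A p = B q) ->
  A x = B x.
Proof.
move=> cA cB H.
have H' : forall t : R, exists pq : V * V, `|pq.1 - x| <= `|t| * K /\
    `|pq.2 - x| <= `|t| * K /\ (t != 0 -> A pq.1 = B pq.2).
  move=> t; case: (eqVneq t 0) => [->|t0].
    by exists (x, x); rewrite /= subrr !normr0 !mul0r lexx; split => //; split => //; rewrite eqxx.
  by have [p [q [h1 [h2 h3]]]] := H t t0; exists (p, q).
have [pq Hpq] := choice H'.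
have cp : (fun t => (pq t).1) @ 0^' --> x.
  by apply: (@cvg_bound _ _ K) => t; case: (Hpq t).
have cq : (fun t => (pq t).2) @ 0^' --> x.
  by apply: (@cvg_bound _ _ K) => t; case: (Hpq t) => _ [].
have c1 : (fun t => A (pq t).1) @ 0^' --> A x := cvg_comp _ _ cp cA.
have c2 : (fun t => B (pq t).2) @ 0^' --> B x := cvg_comp _ _ cq cB.
have c1' : (fun t => B (pq t).2) @ 0^' --> A x.
  apply: cvg_trans c1; apply: near_eq_cvg; near=> t.
  apply: (Hpq t).2.2; near: t; exact: nbhs_dnbhs_neq.
exact: (cvg_unique _ c1' c2).
Unshelve. all: by end_near.
Qed.


Lemma bound2 (a b x : V) (c c' t : R) : `|c| <= `|t| -> `|c'| <= `|t| ->
  `|(c' *: b + (c *: a + x)) - x| <= `|t| * (`|a| + `|b|).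
Proof.
move=> hc hc'; rewrite addrA addrK (le_trans (ler_normD _ _)) // !normrZ.
rewrite mulrDr addrC lerD // ler_wpM2r //.
Qed.

Lemma schwarz (U : V -> R) (x a b : V) :
  (forall z, derivable U z a) -> (forall z, derivable U z b) ->
  (forall z, derivable ('D_a U) z b) -> (forall z, derivable ('D_b U) z a) ->
  continuous ('D_b ('D_a U)) -> continuous ('D_a ('D_b U)) ->
  'D_b ('D_a U) x = 'D_a ('D_b U) x.
Proof.
move=> dUa dUb dUab dUba cab cba.
apply: (@eq_lim_choice ('D_b ('D_a U)) ('D_a ('D_b U)) x (`|a| + `|b|)); [exact: cab|exact: cba|move=> t t0].
have [c1 [hc1 E1]] := @mvt0 (fun s => U (s *: a + (t *: b + x)) - U (s *: a + x))
  (fun s => 'D_a U (s *: a + (t *: b + x)) - 'D_a U (s *: a + x)) t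
  (fun s => is_deriveB (@line_derive U a (t *: b + x) s (dUa _)) (@line_derive U a x s (dUa _))).
have [c2 [hc2 E2]] := @mvt0 (fun r => 'D_a U (r *: b + (c1 *: a + x)))
  (fun r => 'D_b ('D_a U) (r *: b + (c1 *: a + x))) t
  (fun r => @line_derive ('D_a U) b (c1 *: a + x) r (dUab _)).
have [c3 [hc3 E3]] := @mvt0 (fun s => U (s *: b + (t *: a + x)) - U (s *: b + x))
  (fun s => 'D_b U (s *: b + (t *: a + x)) - 'D_b U (s *: b + x)) t
  (fun s => is_deriveB (@line_derive U b (t *: a + x) s (dUb _)) (@line_derive U b x s (dUb _))).
have [c4 [hc4 E4]] := @mvt0 (fun r => 'D_b U (r *: a + (c3 *: b + x)))
  (fun r => 'D_a ('D_b U) (r *: a + (c3 *: b + x))) t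
  (fun r => @line_derive ('D_b U) a (c3 *: b + x) r (dUba _)).
exists (c2 *: b + (c1 *: a + x)), (c4 *: a + (c3 *: b + x)).
split; first exact: (bound2 a b x hc1 hc2).
split; first by rewrite [`|a| + _]addrC; exact: (bound2 b a x hc3 hc4).
move: E1 E2 E3 E4; cbv beta; rewrite !scale0r !add0r.
rewrite [c1 *: a + (t *: b + x)]addrCA [c3 *: b + (t *: a + x)]addrCA.
rewrite [t *: b + (t *: a + x)]addrCA => E1 E2 E3 E4.
rewrite E2 in E1; rewrite E4 in E3.
have alg : forall P Q S X : R, (P - Q) - (S - X) = (P - S) - (Q - X).
  by move=> P Q S X; ring.
have := etrans (esym E1) (etrans (alg _ _ _ _) E3).
by move/(mulfI t0)/(mulfI t0).
Qed.

Lemma dirderiv (g : V -> R) (x y : V) :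
  (forall k z, derivable g z (evec R k)) -> (forall k, continuous (pderiv k g)) ->
  (fun t => t^-1 * (g (t *: y + x) - g x)) @ 0^' --> \sum_(k < d) y 0 k * pderiv k g x.
Proof.
move=> dg cg.
pose e (k : 'I_d) : V := evec R k.
pose Y (m : nat) := \sum_(j < d | (j < m)%N) y 0 j *: e j.
have Y0 : Y 0%N = 0 by rewrite /Y big_pred0.
have Yd : Y d = y by rewrite /Y [RHS]row_sum_delta; apply: eq_bigl => j /=; exact: ltn_ord.
have YS : forall k : 'I_d, Y k.+1 = Y k + y 0 k *: e k.
  move=> k; rewrite /Y (bigD1 k) /= ?ltnSn // addrC; congr (_ + _).
  by apply: eq_bigl => j; rewrite ltnS ltn_neqAle andbC.
have tel : forall t, g (t *: y + x) - g x =
    \sum_(k < d) (g (t *: Y k.+1 + x) - g (t *: Y k + x)).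
  move=> t; rewrite -(big_mkord xpredT (fun k => g (t *: Y k.+1 + x) - g (t *: Y k + x))).
  by rewrite telescope_sumr // Yd Y0 scaler0 add0r.
have step : forall kt : 'I_d * R, exists c : R, `|c| <= `|kt.2| * `|y 0 kt.1| /\
    g (kt.2 *: Y kt.1.+1 + x) - g (kt.2 *: Y kt.1 + x) =
    (kt.2 * y 0 kt.1) * pderiv kt.1 g (c *: e kt.1 + (kt.2 *: Y kt.1 + x)).
  move=> [k t] /=.
  have [c [hc E]] := mvt0 (t * y 0 k)
     (fun s => @line_derive g (e k) (t *: Y k + x) s (dg k _)).
  exists c; split; first by rewrite -normrM.
  move: E; cbv beta; rewrite scale0r add0r => <-.
  by rewrite YS scalerDr scalerA (addrC (t *: Y k)) addrA.
have [c Hc] := choice step.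
pose xi k t := c (k, t) *: e k + (t *: Y k + x).
have Hs : (fun t => \sum_(k < d) y 0 k * pderiv k g (xi k t)) @ 0^' -->
          \sum_(k < d) y 0 k * pderiv k g x.
  apply: cvg_sum_ord => k; apply: cvgMl_tmp.
  apply: (cvg_comp (xi k) (pderiv k g) _ (cg k x)).
  have hb : forall t, `|xi k t - x| <= `|t| * (`|y 0 k| * `|e k| + `|Y k|).
    move=> t; rewrite /xi addrA addrK (le_trans (ler_normD _ _)) // !normrZ mulrDr.
    rewrite lerD // mulrA ler_wpM2r //; exact: (Hc (k, t)).1.
  exact: cvg_bound hb.
apply: cvg_trans Hs; apply: near_eq_cvg; near=> t.
have t0 : t != 0 by near: t; exact: nbhs_dnbhs_neq.
rewrite tel mulr_sumr; apply: eq_bigr => k _.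
by rewrite (Hc (k, t)).2 /= -mulrA mulKf.
Unshelve. all: by end_near.
Qed.

End An.

End Sec.

Theorem lemma3p4 (R : realType) (d : nat)
  (U : 'rV[R]_d -> R) (l : 'rV[R]_d -> 'rV[R]_d) (sigma : 'rV[R]_d)
  (lam mu : R) :
  Ck 3 U -> morse U ->
  Ck_field 1 l ->
  (forall x, \sum_(i < d) grad U x 0 i * l x 0 i = 0) ->
  critical_point U sigma ->
  (* H^sigma has exactly one negative eigenvalue -lam (multiplicity one) *)
  0 < lam ->
  eigenvalue (hessian U sigma) (- lam) ->
  \rank (eigenspace (hessian U sigma) (- lam)) = 1%N ->
  (forall a : R, a < 0 -> eigenvalue (hessian U sigma) a -> a = - lam) ->
  (* -mu is the unique negative eigenvalue of H^sigma + L^sigma *)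
  0 < mu ->
  eigenvalue (hessian U sigma + jacobian_field l sigma) (- mu) ->
  (forall a : R, a < 0 ->
     eigenvalue (hessian U sigma + jacobian_field l sigma) a -> a = - mu) ->
  lam <= mu /\
  lam / (2 * pi * Num.sqrt (- \det (hessian U sigma)))
    <= mu / (2 * pi * Num.sqrt (- \det (hessian U sigma))).
Proof.
move=> CU mU Cl Gz crit lam0 eigH rk1 negH mu0 eigHJ negHJ.
have Hdet := mU sigma crit.
move: Hdet eigHJ negH.
set H := hessian U sigma; set J := jacobian_field l sigma => Hdet eigHJ negH.
have dU : forall i z, derivable U z (evec R i) := fun i => (CU.2 i).1.
have dUi : forall i j z, derivable (pderiv i U) z (evec R j) := fun i j => ((CU.2 i).2.2 j).1.
have cUij : forall i j, continuous (pderiv j (pderiv i U)) := fun i j => (((CU.2 i).2.2 j).2).1.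
have cl : forall i, continuous (fun x => l x 0 i) := fun i => (Cl i).1.
have dl : forall i k z, derivable (fun x => l x 0 i) z (evec R k) := fun i k => ((Cl i).2 k).1.
have cli : forall i k, continuous (pderiv k (fun x => l x 0 i)) := fun i k => ((Cl i).2 k).2.
have Hsym : H^T = H.
  apply/matrixP => i j; rewrite !mxE.
  exact: (schwarz sigma (dU j) (dU i) (dUi j i) (dUi i j) (cUij j i) (cUij i j)).
have Hunit : H \in unitmx by rewrite unitmxE unitfE.
have dpU0 : forall i, pderiv i U sigma = 0.
  by move=> i; have := congr1 (fun v : 'rV_d => v 0 i) crit; rewrite /grad !mxE.
have Bi : forall y i, ((fun t => l (t *: y + sigma) 0 i) @ 0^' --> l sigma 0 i)%classic.
  move=> y i; apply: (cvg_comp (fun t => t *: y + sigma) (fun x => l x 0 i) _ (cl i sigma)).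
  have hb : forall t : R, `|(t *: y + sigma) - sigma| <= `|t| * `|y|.
    by move=> t; rewrite addrK normrZ.
  exact: cvg_bound hb.
have S1 : forall y : 'rV[R]_d, \sum_(i < d) (\sum_(k < d) y 0 k * pderiv k (pderiv i U) sigma) * l sigma 0 i = 0.
  move=> y.
  apply: (@lim_zero R _ _ (cvg_sum_ord (fun i : 'I_d => cvgM (@dirderiv R d _ sigma y (dUi i) (cUij i)) (Bi y i)))) => t /=.
  transitivity (t^-1 * \sum_(i < d) grad U (t *: y + sigma) 0 i * l (t *: y + sigma) 0 i); last by rewrite Gz mulr0.
  rewrite mulr_sumr; apply: eq_bigr => i _.
  by rewrite dpU0 subr0 /grad mxE mulrA.
have lz : l sigma = 0.
  have rH : l sigma *m H = 0.
    apply/rowP => j; rewrite !mxE.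
    rewrite -[RHS](S1 (delta_mx 0 j)); apply: eq_bigr => i _.
    rewrite mulrC; congr (_ * _).
    rewrite (bigD1 j) //= big1 ?addr0 => [|k /negbTE kj]; last by rewrite mxE kj mul0r.
    by rewrite mxE [X in _ = X * _]mxE !eqxx mul1r.
  by rewrite -(mulmxK Hunit (l sigma)) rH mul0mx.
have S2 : forall y : 'rV[R]_d, \sum_(i < d) (\sum_(k < d) y 0 k * pderiv k (pderiv i U) sigma) *
    (\sum_(k < d) y 0 k * pderiv k (fun x => l x 0 i) sigma) = 0.
  move=> y.
  apply: (@lim_zero R _ _ (cvg_sum_ord (fun i : 'I_d => cvgM (@dirderiv R d _ sigma y (dUi i) (cUij i)) (@dirderiv R d _ sigma y (dl i) (cli i))))) => t /=.
  transitivity (t^-1 * t^-1 * \sum_(i < d) grad U (t *: y + sigma) 0 i * l (t *: y + sigma) 0 i); last by rewrite Gz mulr0.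
  rewrite mulr_sumr; apply: eq_bigr => i _.
  by rewrite dpU0 lz [(0 : 'rV_d) 0 i]mxE !subr0 /grad mxE mulrACA.
have S2' : forall y : 'rV[R]_d, (y *m H *m J *m y^T) 0 0 = 0.
  move=> y; rewrite -{1}Hsym -[RHS](S2 y).
  have -> : y *m H^T *m J *m y^T = y *m H^T *m (y *m J^T)^T by rewrite trmx_mul trmxK mulmxA.
  rewrite mxE; apply: eq_bigr => i _; rewrite !mxE; congr (_ * _); apply: eq_bigr => k _.
    by rewrite !mxE.
  by rewrite !mxE.
have eigT : eigenvalue (H + J)^T (- mu).
  by rewrite eigenvalue_root_char char_poly_tr -eigenvalue_root_char.
have [w Hw w0] := eigenvalueP eigT.
have trD : (H + J)^T = H + J^T by rewrite raddfD /= Hsym.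
rewrite trD in Hw.
have Z : (w *m J^T *m (H *m w^T)) 0 0 = 0.
  have -> : (w *m J^T *m (H *m w^T)) 0 0 = ((w *m J^T *m (H *m w^T))^T) 0 0 by rewrite [RHS]mxE.
  by rewrite !trmx_mul !trmxK Hsym !mulmxA; exact: S2' w.
have key : (w *m H *m H *m w^T) 0 0 = - mu * (w *m H *m w^T) 0 0.
  have := congr1 (fun M => (M *m (H *m w^T)) 0 0) Hw.
  rewrite mulmxDr mulmxDl [X in X = _]mxE Z addr0 -scalemxAl [X in _ = X]mxE !mulmxA => ->.
  by [].
have la := @LA R d H lam (ltW lam0) Hsym negH w.
rewrite mulmxDr mul_mx_scalar mulmxDl -scalemxAl mxE [X in _ + X]mxE in la.
have u0 : w *m H != 0.
  apply: contra w0 => /eqP u0; apply/eqP.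
  by rewrite -(mulmxK Hunit w) u0 mul0mx.
have sE : (w *m H *m H *m w^T) 0 0 = \sum_(k < d) (w *m H) 0 k ^+ 2.
  have -> : w *m H *m H *m w^T = (w *m H) *m (w *m H)^T by rewrite trmx_mul Hsym !mulmxA.
  by rewrite mxE; apply: eq_bigr => k _; rewrite [X in _ * X]mxE expr2.
have spos : 0 < (w *m H *m H *m w^T) 0 0.
  rewrite sE lt0r sumr_ge0 ?andbT => [|k _]; last exact: sqr_ge0.
  apply: contra u0 => /eqP S0; apply/eqP/rowP => k; rewrite [RHS]mxE.
  have := psumr_eq0P (fun k _ => sqr_ge0 ((w *m H) 0 k)) S0 (i := k) isT.
  by move/eqP; rewrite sqrf_eq0 => /eqP.
have lm : lam <= mu.
  move: key la spos; set s := (w *m H *m H *m w^T) 0 0; set q := (w *m H *m w^T) 0 0.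
  move=> key la spos; nra.
split => //.
rewrite ler_wpM2r // invr_ge0 mulr_ge0 ?sqrtr_ge0 // mulr_ge0 ?pi_ge0 //.
Qed.
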